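(* Let $\Gamma$ be a connected graph of rank $r$ and let $f:\Gamma\to\Gamma$ be an irreducible graph map which is a homotopy equivalence and which has a fold decomposition consisting of a single fold. Then $\Gamma$ is isomorphic to one of $R_r$, $\Delta_k^-$ or $\Delta_k^+$ for some $k\ge 2$. In particular: (i) if $r\equiv 0\pmod 3$ then $\Gamma\cong R_r$ or $\Gamma\cong\Delta_k^-$ (with $3k-3=r$); (ii) if $r\equiv 1\pmod 3$ then $\Gamma\cong R_r$; (iii) if $r\equiv 2\pmod 3$ then $\Gamma\cong R_r$ or $\Gamma\cong\Delta_k^+$ (with $3k-1=r$).
   Context: A graph $\Gamma$ is a finite 1-dimensional CW complex (multiple edges and loops allowed) with a chosen orientation on each edge; $\mathcal{V}\Gamma$, $\mathcal{E}\Gamma$, $\mathcal{E}^{\pm}\Gamma$ denote vertices, edges, and edges with both orientations; $\bar e$ is the reverse of $e$ and $\iota(e),\tau(e)$ its initial/terminal vertices. The rank of a connected graph is $|\mathcal{E}\Gamma|-|\mathcal{V}\Gamma|+1$. An edge path is a nonempty concatenation $e_1\cdots e_k$ of oriented edges with $\tau(e_i)=\iota(e_{i+1})$; it traverses $e$ if $e$ or $\bar e$ occurs in it. A graph map $f:\Gamma_1\to\Gamma_2$ consists of a vertex map $f_V$ and an edge path $f(e)$ for each $e\in\mathcal{E}^\pm\Gamma_1$ with $\iota(f(e))=f_V(\iota(e))$ and $f(\bar e)=\overline{f(e)}$; it is regarded as a continuous map. A graph isomorphism is a graph map with $f_V$ bijective and restricting to a bijection from $\mathcal{E}^\pm\Gamma_1$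 onto the single edges $\mathcal{E}^\pm\Gamma_2$. The transition matrix $T(f)$ of a self map has $(i,j)$ entry the number of times $f(e_i)$ traverses $e_j$; $f$ is irreducible if $T(f)$ is an irreducible matrix and every vertex of $\Gamma$ has valence at least $3$. Folds: for distinct oriented edges $e_0,e_1$ with $e_1\neq\bar e_0$ and $\iota(e_0)=\iota(e_1)$: the proper full fold of $e_1$ over $e_0$ subdivides $e_1=e_1''e_1'$ and identifies $e_1''$ with $e_0$ (map $e_1\mapsto e_0e_1'$, other edges fixed); the complete fold identifies $e_0$ and $e_1$ entirely; the partial fold subdivides $e_0=e_0'e_0''$, $e_1=e_1''e_1'$ and identifies $e_1''$ with $e_0'$. A fold decomposition with $m$ folds is an expression $f=h\circ f_m\circ\cdots\circ f_1$ with $\Gamma_1=\Gamma$, each $f_i:\Gamma_i\to\Gamma_{i+1}$ a fold, and $h:\Gamma_{m+1}\to\Gamma$ a graph isomorphism. Graphs: the $s$-gonal graph of depth $k$, $P_{s,k}$, has vertices $v_0,\dots,v_{s-1}$ and edges $e_i^j$ ($0\le i\le s-1$, $1\le j\le k$) with $e_i^j$ joining $v_i$ to $v_{i+1}$ (indices mod $s$). The rose $R_r=P_{1,r}$ is one vertex with $r$ loops. $\Delta_k^-$ is $P_{3,k}$ with one edge removed (rank $3k-3$); $\Delta_k^+$ is $P_{3,k+1}$ with two edges from two distinct sides $\{e_i^j:1\le j\le k+1\}$ removed (rank $3k-1$). *)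

(* Defs.v *)
From HB Require Import structures.
From mathcomp Require Import all_boot all_order all_algebra.
Set Implicit Arguments. Unset Strict Implicit. Unset Printing Implicit Defensive.
Import GRing.Theory Num.Theory.

Record graph := Graph { gV : finType; gE : finType; gsrc : gE -> gV; gtgt : gE -> gV }.

(* oriented edges E^{\pm}: (e,false) = e, (e,true) = \bar e *)
Notation oedge G := (gE G * bool)%type.

Definition oinit (G : graph) (e : oedge G) : gV G := if e.2 then gtgt e.1 else gsrc e.1.
Definition oterm (G : graph) (e : oedge G) : gV G := if e.2 then gsrc e.1 else gtgt e.1.
Definition orev (G : graph) (e : oedge G) : oedge G := (e.1, ~~ e.2).

Fixpoint is_walk (G : graph) (v : gV G) (p : seq (oedge G)) : bool :=
  if p is e :: p' then (oinit e == v) && is_walk (oterm e) p' else true.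
Definition wend (G : graph) (v : gV G) (p : seq (oedge G)) : gV G := last v (map (@oterm G) p).
Definition revp (G : graph) (p : seq (oedge G)) : seq (oedge G) := rev (map (@orev G) p).

Definition red (G : graph) (p : seq (oedge G)) : seq (oedge G) :=
  foldr (fun e acc => if acc is e' :: acc' then (if e' == orev e then acc' else e :: acc)
                      else [:: e]) [::] p.

(* valence: number of oriented edges issuing from v (loops count twice) *)
Definition valence (G : graph) (v : gV G) : nat := #|[pred e : oedge G | oinit e == v]|.

Definition adj (G : graph) : rel (gV G) := fun x y =>
  [exists u : gE G, ((gsrc u == x) && (gtgt u == y)) || ((gsrc u == y) && (gtgt u == x))].

Definition connected (G : graph) : Prop :=
  0 < #|gV G| /\ forall x y : gV G, connect (@adj G) x y.

Definition rank (G : graph) : nat := (#|gE G| + 1 - #|gV G|)%N.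

Record gmap (G H : graph) := GMap { gmV : gV G -> gV H; gmE : gE G -> seq (oedge H) }.

Definition oimage (G H : graph) (f : gmap G H) (e : oedge G) : seq (oedge H) :=
  if e.2 then revp (gmE f e.1) else gmE f e.1.
Definition pimage (G H : graph) (f : gmap G H) (p : seq (oedge G)) : seq (oedge H) :=
  flatten (map (oimage f) p).

Definition is_gmap (G H : graph) (f : gmap G H) : Prop :=
  forall u : gE G, [/\ gmE f u != [::], is_walk (gmV f (gsrc u)) (gmE f u)
                     & wend (gmV f (gsrc u)) (gmE f u) = gmV f (gtgt u)].

Definition gcomp (G H K : graph) (h : gmap H K) (g : gmap G H) : gmap G K :=
  GMap (fun v => gmV h (gmV g v)) (fun u => pimage h (gmE g u)).

Definition gmap_eq (G H : graph) (f g : gmap G H) : Prop :=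
  gmV f =1 gmV g /\ gmE f =1 gmE g.

Definition is_giso (G H : graph) (h : gmap G H) : Prop :=
  is_gmap h /\ bijective (gmV h) /\
  exists hE : oedge G -> oedge H, bijective hE /\ forall e, oimage h e = [:: hE e].

Definition isomorphic (G H : graph) : Prop := exists h : gmap G H, is_giso h.

Definition ntrav (G : graph) (f : gmap G G) (u w : gE G) : nat :=
  count (fun e : oedge G => e.1 == w) (gmE f u).

Definition transition (G : graph) (f : gmap G G) : 'M[int]_#|gE G| :=
  \matrix_(i, j) Posz (ntrav f (enum_val i) (enum_val j)).

Definition irreducible_mx (n : nat) (T : 'M[int]_n) : Prop :=
  forall i j : 'I_n, exists k : nat, (0 < (T ^+ k.+1) i j)%R.

Definition irreducible_map (G : graph) (f : gmap G G) : Prop :=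
  irreducible_mx (transition f) /\ forall v : gV G, 3 <= valence v.

(* Homotopy equivalence: f induces an isomorphism on pi_1 at every      *)
(* basepoint (pi_1 = reduced edge loops).                               *)
Definition homotopy_equiv (G H : graph) (f : gmap G H) : Prop :=
  forall v : gV G,
    (forall p, is_walk v p -> wend v p = v -> red (pimage f p) = [::] -> red p = [::]) /\
    (forall q, is_walk (gmV f v) q -> wend (gmV f v) q = gmV f v ->
       exists p, [/\ is_walk v p, wend v p = v & red (pimage f p) = red q]).

Definition orient (G : graph) (b : bool) (p : seq (oedge G)) := if b then revp p else p.

Section Folds.
Variables (G : graph) (u0 u1 : gE G) (b0 b1 : bool).
Let e0 : oedge G := (u0, b0).
Let e1 : oedge G := (u1, b1).

(* proper full fold of e1 over e0: e1 = e1'' e1', e1'' identified with e0;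
   the edge u1 now carries e1' (oriented as (u1,b1): from tau e0 to tau e1) *)
Definition pff_graph : graph :=
  Graph (fun u => if u == u1 then (if b1 then gsrc u1 else oterm e0) else gsrc u)
        (fun u => if u == u1 then (if b1 then oterm e0 else gtgt u1) else gtgt u).
Definition pff_map : gmap G pff_graph :=
  @GMap G pff_graph (fun v => v)
    (fun u => if u == u1 then orient b1 [:: (e0 : oedge pff_graph); (u1, b1)]
              else [:: ((u, false) : oedge pff_graph)]).

(* partial fold: e0 = e0' e0'', e1 = e1'' e1', e1'' identified with e0'.
   New vertex inr tt (the midpoint); inr tt : iota e0 -> mid is e0';
   inl u0 : mid -> tau e0 is e0''; inl u1 : mid -> tau e1 is e1'. *)
Definition pf_src (x : gE G + unit) : gV G + unit :=
  match x with
  | inl u => if (u == u0) || (u == u1) then inr tt else inl (gsrc u)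
  | inr _ => inl (oinit e0)
  end.
Definition pf_tgt (x : gE G + unit) : gV G + unit :=
  match x with
  | inl u => if u == u0 then inl (oterm e0) else if u == u1 then inl (oterm e1)
             else inl (gtgt u)
  | inr _ => inr tt
  end.
Definition pf_graph : graph := Graph pf_src pf_tgt.
Definition pf_map : gmap G pf_graph :=
  @GMap G pf_graph (fun v => inl v)
    (fun u => if u == u0 then orient b0 [:: ((inr tt, false) : oedge pf_graph); (inl u0, false)]
              else if u == u1 then orient b1 [:: ((inr tt, false) : oedge pf_graph); (inl u1, false)]
              else [:: ((inl u, false) : oedge pf_graph)]).

(* complete fold: identify e1 with e0 (so tau e1 with tau e0) *)
Definition cf_keepV (v : gV G) : bool := (v != oterm e1) || (oterm e0 == oterm e1).
Definition cf_qV (v : gV G) : gV G := if v == oterm e1 then oterm e0 else v.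
Lemma cf_qV_in (v : gV G) : cf_keepV (cf_qV v).
Proof.
rewrite /cf_keepV /cf_qV; case: ifP => [_|/negbT ->] //.
by case: (oterm e0 == oterm e1).
Qed.
Definition cf_V : finType := {v : gV G | cf_keepV v}.
Definition cf_E : finType := {u : gE G | u != u1}.
Definition cf_vmap (v : gV G) : cf_V := exist _ (cf_qV v) (cf_qV_in v).
Definition cf_graph : graph :=
  @Graph cf_V cf_E (fun u => cf_vmap (gsrc (val u))) (fun u => cf_vmap (gtgt (val u))).
Definition cf_map : gmap G cf_graph :=
  @GMap G cf_graph cf_vmap
    (fun u => if @insub _ (fun u => u != u1) cf_E u is Some u' then [:: ((u', false) : oedge cf_graph)]
              else if @insub _ (fun u => u != u1) cf_E u0 is Some u0'
                   then orient b1 [:: ((u0', b0) : oedge cf_graph)] else [::]).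
End Folds.

Definition one_fold_decomp (G : graph) (f : gmap G G) : Prop :=
  exists (u0 u1 : gE G) (b0 b1 : bool),
    [/\ u0 != u1  (* e1 <> e0 and e1 <> \bar e0 *),
        oinit ((u0, b0) : oedge G) = oinit ((u1, b1) : oedge G) &
        [\/ exists h : gmap (pff_graph u0 u1 b0 b1) G,
              is_giso h /\ gmap_eq f (gcomp h (pff_map u0 u1 b0 b1)),
            exists h : gmap (pf_graph u0 u1 b0 b1) G,
              is_giso h /\ gmap_eq f (gcomp h (pf_map u0 u1 b0 b1))
          | exists h : gmap (cf_graph u0 u1 b0 b1) G,
              is_giso h /\ gmap_eq f (gcomp h (cf_map u0 u1 b0 b1))]].

(* s-gonal graph of depth k with the edges not satisfying keep removed;
   edge (i,j) (j 0-based, i.e. e_i^{j+1}) joins v_i to v_{i+1 mod s} *)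
Definition Psub (s k : nat) (keep : pred ('I_s * 'I_k)) : graph :=
  @Graph 'I_s {x : 'I_s * 'I_k | keep x} (fun x => (val x).1) (fun x => ordS (val x).1).
Arguments Psub : clear implicits.

Definition Pgraph (s k : nat) : graph := Psub s k predT.
Definition Rose (r : nat) : graph := Pgraph 1 r.
(* Delta_k^- : P_{3,k} minus the edge e_0^k *)
Definition Dminus (k : nat) : graph :=
  Psub 3 k (fun x => ~~ ((x.1 == 0 :> nat) && (x.2 == k.-1 :> nat))).
(* Delta_k^+ : P_{3,k+1} minus e_0^{k+1} and e_1^{k+1} (two distinct sides) *)
Definition Dplus (k : nat) : graph :=
  Psub 3 k.+1 (fun x => ~~ ((x.1 < 2) && (x.2 == k :> nat))).

(* Main.v *)
Require Import Defs.
From mathcomp Require Import all_boot all_order all_algebra.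
From mathcomp Require Import zify.
Set Implicit Arguments. Unset Strict Implicit. Unset Printing Implicit Defensive.
Import GRing.Theory Num.Theory.

Definition ends2 (V : eqType) (s t a b : V) : bool :=
  ((s == a) && (t == b)) || ((s == b) && (t == a)).
Lemma ends2_inj (V W : eqType) (g : V -> W) s t a b : injective g ->
  ends2 (g s) (g t) (g a) (g b) = ends2 s t a b.
Proof. by move=> ig; rewrite /ends2 !(inj_eq ig). Qed.

Lemma card_sumE (T : finType) (P : pred T) : #|[pred x | P x]| = \sum_x (P x : nat).
Proof. by rewrite -sum1_card big_mkcond /=; apply: eq_bigr => x _; rewrite inE; case: (P x). Qed.

Lemma ends2_congr (V : eqType) (s t p q a b : V) :
  ends2 s t p q -> ends2 s t a b = ends2 p q a b.
Proof.
case/orP=> /andP[/eqP-> /eqP->] //; rewrite /ends2.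
by case: (q == a); case: (p == b); case: (q == b); case: (p == a).
Qed.

Lemma count_iso (V E : finType) (src tgt src' tgt' : E -> V) (tau : V -> V)
  (sigma : E -> E) a b :
  injective sigma -> injective tau ->
  (forall u, ends2 (src (sigma u)) (tgt (sigma u)) (tau (src' u)) (tau (tgt' u))) ->
  #|[pred w | ends2 (src' w) (tgt' w) a b]| = #|[pred w | ends2 (src w) (tgt w) (tau a) (tau b)]|.
Proof.
move=> isig itau Hs; rewrite !card_sumE.
rewrite [RHS](reindex_inj isig) /=; apply: eq_bigr => w _.
by rewrite (ends2_congr _ _ (Hs w)) ends2_inj.
Qed.

Lemma count_fold (V E : finType) (src tgt src' tgt' : E -> V) (u1 : E) a b :
  (forall w, w != u1 -> src' w = src w /\ tgt' w = tgt w) ->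
  #|[pred w | ends2 (src' w) (tgt' w) a b]| + ends2 (src u1) (tgt u1) a b =
  #|[pred w | ends2 (src w) (tgt w) a b]| + ends2 (src' u1) (tgt' u1) a b.
Proof.
move=> Hoff; rewrite !card_sumE (bigD1 u1) // [X in _ = X + _](bigD1 u1) //=.
have -> : \sum_(i | i != u1) (ends2 (src' i) (tgt' i) a b : nat) =
          \sum_(i | i != u1) (ends2 (src i) (tgt i) a b : nat).
  by apply: eq_bigr => w /Hoff[-> ->].
lia.
Qed.

Lemma valence_sum (G : graph) (v : gV G) :
  valence v = \sum_(w : gE G) ((gsrc w == v) + (gtgt w == v)).
Proof.
rewrite /valence card_sumE -(pair_bigA _ (fun w b => (oinit ((w, b) : oedge G) == v) : nat)) /=.
by apply: eq_bigr => w _; rewrite big_bool /= /oinit /= addnC.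
Qed.

Lemma card_sig_pred (T : finType) (P Q : pred T) :
  #|[pred e : {x | P x} | Q (sval e)]| = #|[pred x | P x && Q x]|.
Proof.
rewrite -(card_image (f := sval) (@val_inj _ _ _) [pred e : {x | P x} | Q (sval e)]).
apply: eq_card => x; rewrite inE; apply/imageP/andP.
  by case=> -[y Py] /=; rewrite inE /= => Qy ->.
by case=> Px Qx; exists (exist _ x Px).
Qed.

Lemma card_Psub (s K : nat) (keep : pred ('I_s * 'I_K)) (i : 'I_s) :
  #|[pred e : {x : 'I_s * 'I_K | keep x} | (sval e).1 == i]| = #|[pred j : 'I_K | keep (i, j)]|.
Proof.
rewrite (card_sig_pred keep (fun x => x.1 == i)) !card_sumE.
transitivity (\sum_(a : 'I_s) \sum_(j : 'I_K) ((keep (a, j) && (a == i)) : nat)).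
  by rewrite pair_bigA; apply: eq_bigr => -[a j].
rewrite (bigD1 i) //= [X in _ + X]big1 ?addn0; last first.
  by move=> a /negbTE ne; apply: big1 => j _; rewrite ne andbF.
by apply: eq_bigr => j _; rewrite eqxx andbT.
Qed.
Lemma ends2_oe (G : graph) (e : oedge G) : ends2 (gsrc e.1) (gtgt e.1) (oinit e) (oterm e).
Proof. by case: e => u [] /=; rewrite /oinit /oterm /ends2 /= !eqxx ?orbT. Qed.

Lemma pff_facts (G : graph) (u0 u1 : gE G) (b0 b1 : bool) :
  (forall w, w != u1 -> @gsrc (pff_graph u0 u1 b0 b1) w = gsrc w /\
                        @gtgt (pff_graph u0 u1 b0 b1) w = gtgt w) /\
  ends2 (@gsrc (pff_graph u0 u1 b0 b1) u1) (@gtgt (pff_graph u0 u1 b0 b1) u1)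
        (oterm ((u0, b0) : oedge G)) (oterm ((u1, b1) : oedge G)).
Proof.
split; first by move=> w /negbTE /= ->.
by rewrite /= eqxx; case: b1; rewrite /oterm /ends2 /= !eqxx ?orbT.
Qed.

Lemma card_fibers (A I : finType) (p : A -> I) :
  #|A| = \sum_(i : I) #|[pred a | p a == i]|.
Proof.
rewrite -sum1_card (partition_big p xpredT) //=.
by apply: eq_bigr => i _; rewrite -sum1_card.
Qed.

Lemma fiber_bij (A B I : finType) (pA : A -> I) (pB : B -> I) :
  (forall i, #|[pred a | pA a == i]| = #|[pred b | pB b == i]|) ->
  exists psi : A -> B, bijective psi /\ forall a, pB (psi a) = pA a.
Proof.
move=> Hc.
case: (pickP (@predT B)) => [b0 _ | B0].
- pose sA i := enum [pred a | pA a == i]. pose sB i := enum [pred b | pB b == i].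
  have Hs i : size (sA i) = size (sB i) by rewrite /sA /sB -!cardE Hc.
  pose psi a := nth b0 (sB (pA a)) (index a (sA (pA a))).
  have HinA a : a \in sA (pA a) by rewrite mem_enum inE.
  have Hlt a : index a (sA (pA a)) < size (sB (pA a)) by rewrite -Hs index_mem.
  have HpB a : pB (psi a) = pA a.
    by have := mem_nth b0 (Hlt a); rewrite mem_enum inE => /eqP.
  exists psi; split => //.
  apply: inj_card_bij.
  + move=> a a' E. have E1 : pA a' = pA a by rewrite -HpB -E HpB.
    have Ha' : a' \in sA (pA a) by rewrite -E1.
    have Hl' : index a' (sA (pA a)) < size (sB (pA a)) by rewrite -Hs index_mem.
    move: E; rewrite /psi E1 => /eqP; rewrite nth_uniq ?enum_uniq ?Hlt // => /eqP Ei.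
    by rewrite -(nth_index a (HinA a)) Ei nth_index.
  + by rewrite (card_fibers pA) (card_fibers pB); apply/eq_leq/eq_bigr => i _; rewrite Hc.
- have F : forall b : B, False by move=> b; have := B0 b.
  have A0 : forall a : A, False.
    move=> a; have : 0 < #|[pred b | pB b == pA a]| by rewrite -Hc; apply/card_gt0P; exists a; rewrite inE.
    by case/card_gt0P => b _; case: (F b).
  exists (fun a => False_rect B (A0 a)); split; last by move=> a; case: (A0 a).
  by exists (fun b => False_rect A (F b)) => [a|b]; [case: (A0 a)| case: (F b)].
Qed.

Lemma iso_Psub (G : graph) (s K : nat) (keep : pred ('I_s * 'I_K))
  (phi : gV G -> 'I_s) (side : gE G -> 'I_s) :
  bijective phi ->
  (forall i, #|[pred w | side w == i]| =
             #|[pred e : {x : 'I_s * 'I_K | keep x} | (sval e).1 == i]|) ->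
  (forall w, ((phi (gsrc w) == side w) && (phi (gtgt w) == ordS (side w))) ||
             ((phi (gtgt w) == side w) && (phi (gsrc w) == ordS (side w)))) ->
  isomorphic G (Psub s K keep).
Proof.
move=> bphi Hc Hend.
have [psi [bpsi Hpsi]] := fiber_bij Hc.
pose fl w := ~~((phi (gsrc w) == side w) && (phi (gtgt w) == ordS (side w))).
pose h := @GMap G (Psub s K keep) phi (fun w => [:: (psi w, fl w)]).
exists h; split; [|split => //].
- move=> u; rewrite /h /=; split => //.
  + rewrite andbT /oinit /=; rewrite /fl; move: (Hend u) (Hpsi u).
    case: (psi u) => [[i j] kp] /= Hu ->.
    case: (boolP (_ && _)) Hu => [/andP[/eqP -> _] _ //| H1 /=].
    by case/andP=> _ /eqP ->.
  + rewrite /wend /oterm /= /fl; move: (Hend u) (Hpsi u).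
    case: (psi u) => [[i j] kp] /= Hu ->.
    case: (boolP (_ && _)) Hu => [/andP[_ /eqP -> ] _ //| H1 /=].
    by case/andP=> /eqP -> _.
- have [psi' c1 c2] := bpsi.
  exists (fun e : oedge G => (psi e.1, e.2 (+) fl e.1)); split.
  + exists (fun e : oedge (Psub s K keep) => (psi' e.1, e.2 (+) fl (psi' e.1))).
    * by case=> w b /=; rewrite c1 -addbA addbb addbF.
    * by case=> w b /=; rewrite c2 -addbA addbb addbF.
  + by case=> w [|] //=; rewrite /oimage /= /revp /= /orev /=.
Qed.

Notation o0 := (@Ordinal 3 0 isT).
Notation o1 := (@Ordinal 3 1 isT).
Notation o2 := (@Ordinal 3 2 isT).

Lemma ord3_cases (i : 'I_3) : [\/ i = o0, i = o1 | i = o2].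
Proof.
case: i => [[|[|[|n]]] Hi] //.
- by constructor 1; apply: val_inj.
- by constructor 2; apply: val_inj.
- by constructor 3; apply: val_inj.
Qed.

Lemma tri_iso (G : graph) (p0 p1 p2 : gV G) K (keep : pred ('I_3 * 'I_K)) :
  p0 != p1 -> p1 != p2 -> p2 != p0 ->
  (forall v, [|| v == p0, v == p1 | v == p2]) ->
  (forall w, [|| ends2 (gsrc w) (gtgt w) p0 p1, ends2 (gsrc w) (gtgt w) p1 p2
               | ends2 (gsrc w) (gtgt w) p2 p0]) ->
  #|[pred w | ends2 (gsrc w) (gtgt w) p0 p1]| = #|[pred j | keep (o0, j)]| ->
  #|[pred w | ends2 (gsrc w) (gtgt w) p1 p2]| = #|[pred j | keep (o1, j)]| ->
  #|[pred w | ends2 (gsrc w) (gtgt w) p2 p0]| = #|[pred j | keep (o2, j)]| ->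
  [/\ #|gV G| = 3,
      #|gE G| = #|[pred j | keep (o0, j)]| + #|[pred j | keep (o1, j)]| + #|[pred j | keep (o2, j)]|
    & isomorphic G (Psub 3 K keep)].
Proof.
move=> n01 n12 n20 Hall Hcov C0 C1 C2.
have d01 := negbTE n01; have d12 := negbTE n12; have d20 := negbTE n20.
have d10 : (p1 == p0) = false by rewrite eq_sym.
have d21 : (p2 == p1) = false by rewrite eq_sym.
have d02 : (p0 == p2) = false by rewrite eq_sym.
pose phi v := if v == p0 then o0 else if v == p1 then o1 else o2.
pose g (i : 'I_3) := if i == o0 then p0 else if i == o1 then p1 else p2.
have bphi : bijective phi.
  exists g => [v|i].
    rewrite /phi /g; case: (v =P p0) => [->//|/eqP/negbTE N0].
    case: (v =P p1) => [->//|/eqP/negbTE N1] /=.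
    by have := Hall v; rewrite N0 N1 /= => /eqP ->.
  by case: (ord3_cases i) => ->; rewrite /phi /g /= ?eqxx ?d10 ?d20 ?d21.
pose side w := if ends2 (gsrc w) (gtgt w) p0 p1 then o0
               else if ends2 (gsrc w) (gtgt w) p1 p2 then o1 else o2.
have X01 w : ends2 (gsrc w) (gtgt w) p0 p1 -> ends2 (gsrc w) (gtgt w) p1 p2 = false /\
                                               ends2 (gsrc w) (gtgt w) p2 p0 = false.
  by move=> H; rewrite !(ends2_congr _ _ H) /ends2 ?d01 ?d12 ?d20 ?d10 ?d21 ?d02 ?andbF.
have X12 w : ends2 (gsrc w) (gtgt w) p1 p2 -> ends2 (gsrc w) (gtgt w) p2 p0 = false.
  by move=> H; rewrite !(ends2_congr _ _ H) /ends2 ?d01 ?d12 ?d20 ?d10 ?d21 ?d02 ?andbF.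
have Hfib i : #|[pred w | side w == i]| = #|[pred j | keep (i, j)]|.
  case: (ord3_cases i) => ->.
  - rewrite -C0; apply: eq_card => w; rewrite !inE /side.
    by case: ifP => // _; case: ifP.
  - rewrite -C1; apply: eq_card => w; rewrite !inE /side.
    case: ifP => [/X01[->]//|_]; by case: ifP.
  - rewrite -C2; apply: eq_card => w; rewrite !inE /side.
    have := Hcov w.
    case: ifP => [/X01[_ ->]//|_]; case: ifP => [/X12 ->//|_] /=; by case: (ends2 _ _ p2 p0).
split.
- by rewrite (bij_eq_card bphi) card_ord.
- rewrite (card_fibers side) !big_ord_recl big_ord0 addn0 !Hfib addnA.
  have -> : (lift ord0 (lift ord0 ord0) : 'I_3) = o2 by apply: val_inj.
  have -> : (lift ord0 ord0 : 'I_3) = o1 by apply: val_inj.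
  have -> : (ord0 : 'I_3) = o0 by apply: val_inj.
  by [].
- apply: (iso_Psub (phi := phi) (side := side)) => // [i|w].
    by rewrite Hfib card_Psub.
  rewrite /side.
  case: ifP => [H|N0]; last case: ifP => [H|N1].
  + by case/orP: H => /andP[/eqP-> /eqP->]; rewrite /phi ?eqxx ?d10 ?d01.
  + by case/orP: H => /andP[/eqP-> /eqP->]; rewrite /phi ?eqxx ?d10 ?d01 ?d12 ?d21 ?d20 ?d02.
  + have := Hcov w; rewrite N0 N1 /= => H2.
    by case/orP: H2 => /andP[/eqP-> /eqP->]; rewrite /phi ?eqxx ?d10 ?d01 ?d12 ?d21 ?d20 ?d02.
Qed.

Lemma rose_iso (G : graph) (x : gV G) : (forall v, v = x) ->
  isomorphic G (Rose (rank G)).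
Proof.
move=> Hx.
have o1eq (i j : 'I_1) : i == j by case: i j => [[|//] ?] [[|//] ?].
pose phi := fun _ : gV G => (ord0 : 'I_1).
have bphi : bijective phi by exists (fun _ => x) => [v|i]; [rewrite /= (Hx v)|apply/eqP/o1eq].
have cV : #|gV G| = 1 by rewrite (bij_eq_card bphi) card_ord.
apply: (iso_Psub (phi := phi) (side := fun _ => ord0)); first exact: bphi; last by move=> w; rewrite !o1eq.
move=> i.
rewrite card_Psub /rank cV addnK (eq_card (B := predT)); last by move=> w; rewrite !inE o1eq.
by rewrite (eq_card (B := predT)) ?card_ord // => j; rewrite !inE.
Qed.

Lemma card_neq (K m : nat) : m < K -> #|[pred j : 'I_K | ~~ ((j : nat) == m)]| = K.-1.
Proof.
move=> Hm; transitivity #|predC1 (Ordinal Hm)|; last by rewrite cardC1 card_ord.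
by apply: eq_card => j; rewrite !inE.
Qed.

Lemma card_all (K : nat) (P : pred 'I_K) : (forall j, P j) -> #|[pred j | P j]| = K.
Proof.
move=> HP; transitivity #|'I_K|; last by rewrite card_ord.
by apply: eq_card => j; rewrite !inE HP.
Qed.

Lemma irred_closed (G : graph) (f : gmap G G) (A : pred (gE G)) :
  (forall u w, 0 < ntrav f u w -> A u -> A w) ->
  irreducible_mx (transition f) -> forall u w, A u -> A w.
Proof.
move=> Hcl Hirr u w Au; apply/negPn/negP => Aw.
set T := transition f.
have H0 : forall k (i j : 'I_#|gE G|), A (enum_val i) -> ~~ A (enum_val j) ->
    (T ^+ k.+1)%R i j = 0%R.
  elim=> [|k IH] i j Ai Aj.
    rewrite expr1 /T /transition mxE.
    case: (posnP (ntrav f (enum_val i) (enum_val j))) => [->//|/Hcl/(_ Ai) Aj'].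
    by rewrite Aj' in Aj.
  rewrite exprSr -mulmxE mxE; apply: big1 => l _.
  case: (boolP (A (enum_val l))) => Al.
    rewrite {2}/T /transition mxE.
    case: (posnP (ntrav f (enum_val l) (enum_val j))) => [->|/Hcl/(_ Al) Aj']; first by rewrite mulr0.
    by rewrite Aj' in Aj.
  by rewrite IH // mul0r.
have [k Hk] := Hirr (enum_rank u) (enum_rank w).
by rewrite H0 ?enum_rankK // ltxx in Hk.
Qed.

Lemma no_pf (G : graph) (u0 u1 : gE G) (b0 b1 : bool) (h : gmap (pf_graph u0 u1 b0 b1) G) : is_giso h -> False.
Proof.
case=> _ [bV _]; have := bij_eq_card bV.
rewrite /= card_sum card_unit addn1 => H. exact: (n_Sn _ (esym H)).
Qed.

Lemma no_cf (G : graph) (u0 u1 : gE G) (b0 b1 : bool) (h : gmap (cf_graph u0 u1 b0 b1) G) : is_giso h -> False.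
Proof.
case=> _ [_ [hE [bE _]]]; have := bij_eq_card bE.
rewrite !card_prod card_bool /= /cf_E card_sig.
have := cardC1 u1; rewrite /predC1.
have : 0 < #|gE G| by apply/card_gt0P; exists u1.
move=> H1 H2. rewrite H2. have helper : forall n, 0 < n -> n.-1 * 2 = n * 2 -> False by move=> n; lia. exact: (helper _ H1).
Qed.

Lemma pimage_map (G H : graph) (h : gmap G H) (hE : oedge G -> oedge H) p :
  (forall e, oimage h e = [:: hE e]) -> pimage h p = map hE p.
Proof. by move=> HE; elim: p => //= e p IH; rewrite /pimage /= HE /= -IH. Qed.

Lemma pff_perm (G : graph) (f : gmap G G) (u0 u1 : gE G) (b0 b1 : bool)
  (h : gmap (pff_graph u0 u1 b0 b1) G) :
  is_giso h -> gmap_eq f (gcomp h (pff_map u0 u1 b0 b1)) ->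
  exists sigma : gE G -> gE G, [/\ injective sigma,
     forall u, ends2 (gsrc (sigma u)) (gtgt (sigma u)) (gmV h (@gsrc (pff_graph u0 u1 b0 b1) u))
                              (gmV h (@gtgt (pff_graph u0 u1 b0 b1) u)) &
     forall u w, 0 < ntrav f u w -> (w == sigma u) || ((u == u1) && (w == sigma u0))].
Proof.
case=> Hg [bV [hE [bE HE]]] [_ Hf].
have HEf u : gmE h u = [:: hE (u, false)] by rewrite -HE.
have HEt u : hE (u, true) = orev (hE (u, false)).
  by have := HE (u, true); rewrite /oimage /= HEf /revp /= => -[].
pose sigma u := (hE (u, false)).1.
have hE1 u b : (hE (u, b)).1 = sigma u by case: b; rewrite ?HEt.
exists sigma; split.
- move=> u v; rewrite /sigma.
  case Eu: (hE (u, false)) => [s c]; case Ev: (hE (v, false)) => [s' c'] /= Es.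
  subst s'. have [Ec|Ec] := eqVneq c c'.
    by subst c'; rewrite -Ev in Eu; case: (bij_inj bE Eu).
  have : hE (v, true) = hE (u, false) by rewrite HEt Ev Eu /orev /=; move: Ec; clear; case: c; case: c'.
  by move/(bij_inj bE).
- move=> u; have [_ Hw He] := Hg u; move: Hw He; rewrite HEf /sigma /wend /=.
  case: (hE (u, false)) => [s c] /=; rewrite andbT /oinit /oterm /= /ends2.
  by case: c => /= /eqP -> ->; rewrite !eqxx ?orbT.
- move=> u w; rewrite /ntrav Hf /= (pimage_map _ HE) count_map.
  case: ifP => [/eqP ->|_] /=; last first.
    by rewrite addn0 hE1 orbF eq_sym; case: (w == sigma u).
  rewrite /orient; case: ifP => _; rewrite /revp /= /orev /= !hE1 ?eqxx /=.
  all: by rewrite !(eq_sym w); case: (sigma u0 == w); case: (sigma u1 == w).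
Qed.

Lemma ends2_map (V W : eqType) (g : V -> W) s t a b :
  ends2 s t a b -> ends2 (g s) (g t) (g a) (g b).
Proof. by case/orP=> /andP[/eqP-> /eqP->]; rewrite /ends2 !eqxx ?orbT. Qed.


Lemma ends2_sym (V : eqType) (s t a b : V) : ends2 s t a b = ends2 s t b a.
Proof. by rewrite /ends2 orbC. Qed.

Lemma ends2_swap (V : eqType) (s t a b : V) : ends2 s t a b = ends2 t s a b.
Proof. by rewrite /ends2; case: (s == a); case: (t == b); case: (s == b); case: (t == a). Qed.

Lemma ends2_trans (V : eqType) (s t a b c d : V) :
  ends2 s t a b -> ends2 a b c d -> ends2 s t c d.
Proof. by case/orP=> /andP[/eqP-> /eqP->] //; rewrite ends2_swap. Qed.

Lemma ends2_refl (V : eqType) (a b : V) : ends2 a b a b.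
Proof. by rewrite /ends2 !eqxx. Qed.

Lemma all_edges (V E : finType) (src tgt src' tgt' : E -> V) (tau : V -> V)
  (sigma : E -> E) (u1 : E) (y z : V) :
  injective sigma -> (forall w, w != u1 -> src' w = src w /\ tgt' w = tgt w) ->
  ends2 (src' u1) (tgt' u1) y z ->
  (forall u, ends2 (src (sigma u)) (tgt (sigma u)) (tau (src' u)) (tau (tgt' u))) ->
  (forall w, fconnect sigma u1 w) ->
  forall w, exists i, ends2 (src w) (tgt w) (iter i tau y) (iter i tau z).
Proof.
move=> isig Hoff H1 Hs Hc.
have step v i : ends2 (src' v) (tgt' v) (iter i tau y) (iter i tau z) ->
    ends2 (src (sigma v)) (tgt (sigma v)) (iter i.+1 tau y) (iter i.+1 tau z).
  by move=> Hv; apply: ends2_trans (Hs v) _; rewrite !iterS; apply: ends2_map.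
have P' : forall n, exists i, ends2 (src' (iter n sigma u1)) (tgt' (iter n sigma u1))
                         (iter i tau y) (iter i tau z).
  elim=> [|n [i IH]]; first by exists 0.
  have [Eq|N] := eqVneq (iter n.+1 sigma u1) u1; first by rewrite Eq; exists 0.
  have [-> ->] := Hoff _ N; exists i.+1; rewrite iterS; exact: step.
move=> w; rewrite -(f_finv isig w).
have [i Hi] := P' (findex sigma u1 (finv sigma w)).
rewrite iter_findex ?Hc // in Hi.
by exists i.+1; apply: step.
Qed.

Lemma ends2_comm (V : eqType) (s t a b : V) : ends2 s t a b -> ends2 a b s t.
Proof. by case/orP=> /andP[/eqP-> /eqP->]; rewrite /ends2 !eqxx ?orbT. Qed.

Lemma ends2_case (V : eqType) (s t a b : V) : ends2 s t a b -> (s = a /\ t = b) \/ (s = b /\ t = a).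
Proof. by case/orP=> /andP[/eqP-> /eqP->]; [left|right]. Qed.

Lemma iter_inj (V : Type) (g : V -> V) n : injective g -> injective (iter n g).
Proof. by move=> ig; elim: n => [|n IH] a b //= /ig/IH. Qed.

Lemma tri_struct (V E : finType) (src tgt : E -> V) (tau : V -> V) (u0 u1 : E) (x y z : V) :
  injective tau -> x != y -> ends2 (src u0) (tgt u0) x y -> ends2 (src u1) (tgt u1) x z ->
  (forall w, exists i, ends2 (src w) (tgt w) (iter i tau y) (iter i tau z)) ->
  exists rho : V -> V, [/\ injective rho, (forall v, rho (tau v) = tau (rho v)),
     [/\ rho x = y, rho y = z & rho z = x] &
     forall w, exists c, ends2 (src w) (tgt w) c (rho c)].
Proof.
move=> itau nxy H0 H1 Hall.
have sym := fconnect_sym itau.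
have Hz : fconnect tau y z.
  have [i Hi] := Hall u0; have [j Hj] := Hall u1.
  have := ends2_trans (ends2_comm H0) Hi; have := ends2_trans (ends2_comm H1) Hj.
  case/ends2_case=> [[E1 E2]|[E1 E2]]; case/ends2_case=> [[E3 E4]|[E3 E4]].
  - by rewrite sym E4 fconnect_iter.
  - have : fconnect tau y x by rewrite E1 fconnect_iter.
    by move/connect_trans; apply; rewrite sym E3 fconnect_iter.
  - by rewrite E2 fconnect_iter.
  - by rewrite E2 fconnect_iter.
pose d := findex tau y z; pose rho := iter d tau.
have rhoy : rho y = z by rewrite /rho iter_findex.
have rhoC v : rho (tau v) = tau (rho v) by rewrite /rho -iterSr iterS.
have irho : injective rho by apply: iter_inj.
have Hedge w : exists c, ends2 (src w) (tgt w) c (rho c).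
  have [i Hi] := Hall w; exists (iter i tau y).
  by rewrite /rho -iterD addnC iterD -/rho rhoy.
exists rho; split => //.
have [c0 Hc0] := Hedge u0; have [c1 Hc1] := Hedge u1.
have A0 : y = rho x \/ x = rho y.
  by case/ends2_case: (ends2_trans (ends2_comm H0) Hc0) => [[-> ->]|[-> ->]]; [left|right].
have A1 : z = rho x \/ x = rho z.
  by case/ends2_case: (ends2_trans (ends2_comm H1) Hc1) => [[-> ->]|[-> ->]]; [left|right].
case: A0 A1 => [E0|E0] [E1|E1].
- move: nxy; rewrite -rhoy E0 in E1; move: (irho _ _ E1) => Hx; by rewrite E0 Hx eqxx.
- by split.
- have xz : x = z by rewrite E0 rhoy.
  have : rho y = rho z by rewrite rhoy {1}E1 xz.
  by move=> /irho yz; move: nxy; rewrite xz yz eqxx.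
- have : rho y = rho z by rewrite -E0 E1.
  by move=> /irho yz; move: nxy; rewrite E0 rhoy yz eqxx.
Qed.

Lemma cnt_Dplus (k : nat) (i : 'I_3) :
  #|[pred j : 'I_k.+1 | ~~ ((i < 2) && ((j : nat) == k))]| = if i < 2 then k else k.+1.
Proof.
case: ifP => Hi.
  by rewrite -[RHS]/(k.+1.-1) -(card_neq (ltnSn k)); apply: eq_card => j; rewrite !inE.
by apply: card_all.
Qed.

Lemma cnt_Dminus (k : nat) (i : 'I_3) : 0 < k ->
  #|[pred j : 'I_k | ~~ (((i : nat) == 0) && ((j : nat) == k.-1))]| = if (i : nat) == 0 then k.-1 else k.
Proof.
move=> Hk; case: ifP => Hi.
  have Hm : k.-1 < k by case: k Hk.
  by apply: etrans (card_neq Hm); apply: eq_card => j; rewrite !inE.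
by apply: card_all.
Qed.

Lemma pff_main (G : graph) (f : gmap G G) (u0 u1 : gE G) (b0 b1 : bool)
  (h : gmap (pff_graph u0 u1 b0 b1) G) :
  connected G -> irreducible_map f -> u0 != u1 ->
  oinit ((u0, b0) : oedge G) = oinit ((u1, b1) : oedge G) ->
  is_giso h -> gmap_eq f (gcomp h (pff_map u0 u1 b0 b1)) ->
  isomorphic G (Rose (rank G)) \/
  (exists k, [/\ 2 <= k, rank G = 3 * k - 3 & isomorphic G (Dminus k)]) \/
  (exists k, [/\ 2 <= k, rank G = 3 * k - 1 & isomorphic G (Dplus k)]).
Proof.
move=> [Vpos Hconn] [Hirr Hval] n01 Hx Hiso Hf.
have [sigma [isig Hends Htr]] := pff_perm Hiso Hf.
have itau : injective (gmV h) by case: Hiso => _ [/bij_inj].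
set tau := gmV h in Hends itau *.
set x := oinit ((u1, b1) : oedge G).
set y := oterm ((u0, b0) : oedge G).
set z := oterm ((u1, b1) : oedge G).
have E0 : ends2 (gsrc u0) (gtgt u0) x y by rewrite /x -Hx; exact: (ends2_oe (u0, b0)).
have E1 : ends2 (gsrc u1) (gtgt u1) x z by exact: (ends2_oe (u1, b1)).
have [Hoff Hu1'] := pff_facts u0 u1 b0 b1.
rewrite -/y -/z in Hu1'.
have Hcl : forall u w, 0 < ntrav f u w -> fconnect sigma u0 u -> fconnect sigma u0 w.
  move=> u w /Htr /orP[/eqP->|/andP[_ /eqP->]] Au.
    exact: connect_trans Au (fconnect1 _ _).
  exact: fconnect1.
have H0 w : fconnect sigma u0 w := @irred_closed _ _ _ Hcl Hirr u0 w (connect0 _ u0).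
have Hc w : fconnect sigma u1 w.
  by apply: connect_trans (H0 w); rewrite fconnect_sym //; exact: H0.
have Hall := all_edges (src := @gsrc G) (tgt := @gtgt G)
   (src' := @gsrc (pff_graph u0 u1 b0 b1)) (tgt' := @gtgt (pff_graph u0 u1 b0 b1))
   isig Hoff Hu1' Hends Hc.
case: (eqVneq x y) => [exy | nxy].
  left.
  have yz : y = z.
    have [i Hi] := Hall u0.
    have := ends2_trans (ends2_comm E0) Hi; rewrite exy.
    by case/ends2_case => [[H1 H2]|[H1 H2]]; apply: (@iter_inj (gV G) tau i itau); rewrite -H1 -H2.
  have loops (w : gE G) : gsrc w = gtgt w.
    by have [i] := Hall w; rewrite -yz; case/orP=> /andP[/eqP-> /eqP->].
  apply: (rose_iso (x := x)) => v.
  have Hcl' : closed (@adj G) (pred1 x).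
    by move=> a b /existsP[u /orP[] /andP[/eqP <- /eqP <-]]; rewrite loops.
  by have := closed_connect Hcl' (Hconn x v); rewrite !inE eqxx => /esym/eqP.
right.
have [rho [irho rhoC [rx ry rz] Hrho]] :=
  tri_struct (src := @gsrc G) (tgt := @gtgt G) itau nxy E0 E1 Hall.
have nyz : y != z.
  apply/eqP => yz; have : rho x = rho y by rewrite rx ry yz.
  by move/irho => exy; rewrite exy eqxx in nxy.
have nzx : z != x.
  apply/eqP => zx; have : rho y = rho z by rewrite ry rz zx.
  by move/irho => eyz; rewrite eyz eqxx in nyz.
have dxy := negbTE nxy; have dyz := negbTE nyz; have dzx := negbTE nzx.
have dyx : (y == x) = false by rewrite eq_sym.
have dzy : (z == y) = false by rewrite eq_sym.
have dxz : (x == z) = false by rewrite eq_sym.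
have Wrho c : [|| rho c == x, rho c == y | rho c == z] = [|| c == x, c == y | c == z].
  have -> : (rho c == x) = (c == z) by rewrite -rz (inj_eq irho).
  have -> : (rho c == y) = (c == x) by rewrite -rx (inj_eq irho).
  have -> : (rho c == z) = (c == y) by rewrite -ry (inj_eq irho).
  by case: (c == x); case: (c == y); case: (c == z).
have Hall3 v : [|| v == x, v == y | v == z].
  pose W := [pred v : gV G | [|| v == x, v == y | v == z]].
  have HW : closed (@adj G) W.
    move=> a b /existsP[u Hu]; have [c Hcu] := Hrho u.
    have := ends2_trans (ends2_comm Hu) Hcu.
    by case/ends2_case => [[-> ->]|[-> ->]]; rewrite !inE Wrho.
  by have := closed_connect HW (Hconn x v); rewrite !inE eqxx /= => <-.
have Hcov (w : gE G) : [|| ends2 (gsrc w) (gtgt w) x y, ends2 (gsrc w) (gtgt w) y z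
                      | ends2 (gsrc w) (gtgt w) z x].
  have [c Hcw] := Hrho w.
  by case/or3P: (Hall3 c) => /eqP Ec; rewrite Ec ?rx ?ry ?rz in Hcw; rewrite Hcw ?orbT.
pose N a b := #|[pred w : gE G | ends2 (gsrc w) (gtgt w) a b]|.
pose N' a b := #|[pred w : gE G | ends2 (@gsrc (pff_graph u0 u1 b0 b1) w)
                                       (@gtgt (pff_graph u0 u1 b0 b1) w) a b]|.
have CI a b : N' a b = N (tau a) (tau b).
  exact: (count_iso (src := @gsrc G) (tgt := @gtgt G)
     (src' := @gsrc (pff_graph u0 u1 b0 b1)) (tgt' := @gtgt (pff_graph u0 u1 b0 b1))
     a b isig itau Hends).
have CF a b : N' a b + ends2 (gsrc u1) (gtgt u1) a b =
              N a b + ends2 (@gsrc (pff_graph u0 u1 b0 b1) u1) (@gtgt (pff_graph u0 u1 b0 b1) u1) a b.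
  exact: (count_fold (src := @gsrc G) (tgt := @gtgt G)
     (src' := @gsrc (pff_graph u0 u1 b0 b1)) (tgt' := @gtgt (pff_graph u0 u1 b0 b1))
     a b Hoff).
have Fyz : N' y z = N y z + 1.
  have := CF y z; rewrite (ends2_congr _ _ E1) (ends2_congr _ _ Hu1') /ends2 !eqxx ?dxy ?dxz /=.
  lia.
have Fzx : N' z x + 1 = N z x.
  have := CF z x; rewrite (ends2_congr _ _ E1) (ends2_congr _ _ Hu1') /ends2 !eqxx ?dyz ?dyx /=.
  lia.
have Fxy : N' x y = N x y.
  have := CF x y; rewrite (ends2_congr _ _ E1) (ends2_congr _ _ Hu1') /ends2 !eqxx ?dzy ?dxy ?dyx ?dzx /=.
  lia.
have Vy : 3 <= N x y + N y z.
  apply: leq_trans (Hval y) _; rewrite valence_sum /N !card_sumE -big_split /=.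
  apply: leq_sum => w _.
  by case/or3P: (Hcov w) => /ends2_case [[-> ->]|[-> ->]];
    rewrite /ends2 ?eqxx ?dxy ?dyz ?dzx ?dyx ?dzy ?dxz.
have tz : tau z = rho (tau y) by rewrite -ry rhoC.
have tx : tau x = rho (tau z) by rewrite -rz rhoC.
case/or3P: (Hall3 (tau y)) => /eqP ty.
-
  rewrite ty rx in tz; rewrite tz ry in tx.
  have e1 : N x y = N y z + 1 by rewrite -Fyz CI ty tz.
  have e2 : N z x = N y z + 1 by rewrite -Fzx CI tz tx.
  set A := N y z in e1 e2 Vy.
  left; exists A.+1.
  have Hall3' v : [|| v == y, v == z | v == x].
    by case/or3P: (Hall3 v) => ->; rewrite ?orbT.
  have Hcov' w : [|| ends2 (gsrc w) (gtgt w) y z, ends2 (gsrc w) (gtgt w) z x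
                  | ends2 (gsrc w) (gtgt w) x y].
    by case/or3P: (Hcov w) => ->; rewrite ?orbT.
  have C0 : N y z = #|[pred j : 'I_A.+1 | ~~ (((o0 : nat) == 0) && ((j : nat) == A.+1.-1))]|.
    by rewrite cnt_Dminus.
  have C1 : N z x = #|[pred j : 'I_A.+1 | ~~ (((o1 : nat) == 0) && ((j : nat) == A.+1.-1))]|.
    by rewrite cnt_Dminus //= e2 addn1.
  have C2 : N x y = #|[pred j : 'I_A.+1 | ~~ (((o2 : nat) == 0) && ((j : nat) == A.+1.-1))]|.
    by rewrite cnt_Dminus //= e1 addn1.
  have [cV cE Hiso'] := tri_iso
    (keep := fun p : 'I_3 * 'I_A.+1 => ~~ (((p.1 : nat) == 0) && ((p.2 : nat) == A.+1.-1)))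
    nyz nzx nxy Hall3' Hcov' C0 C1 C2.
  split => //; first by lia.
  rewrite /rank cE cV !cnt_Dminus //=; lia.
-
  rewrite ty ry in tz.
  by move: Fyz; rewrite CI ty tz; lia.
-
  rewrite ty rz in tz; rewrite tz rx in tx.
  have e1 : N z x = N y z + 1 by rewrite -Fyz CI ty tz.
  have e2 : N x y + 1 = N z x by rewrite -Fzx CI tz tx.
  set A := N y z in e1 e2 Vy.
  right; exists A.
  have C0 : N x y = #|[pred j : 'I_A.+1 | ~~ ((o0 < 2) && ((j : nat) == A))]|.
    by rewrite cnt_Dplus /=; lia.
  have C1 : N y z = #|[pred j : 'I_A.+1 | ~~ ((o1 < 2) && ((j : nat) == A))]|.
    by rewrite cnt_Dplus.
  have C2 : N z x = #|[pred j : 'I_A.+1 | ~~ ((o2 < 2) && ((j : nat) == A))]|.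
    by rewrite cnt_Dplus /= e1 addn1.
  have [cV cE Hiso'] := tri_iso
    (keep := fun p : 'I_3 * 'I_A.+1 => ~~ ((p.1 < 2) && ((p.2 : nat) == A)))
    nxy nyz nzx Hall3 Hcov C0 C1 C2.
  split => //; first by lia.
  rewrite /rank cE cV !cnt_Dplus /=; lia.
Qed.

Lemma mod_m (k : nat) : 2 <= k -> (3 * k - 3) %% 3 = 0.
Proof. move=> Hk; have -> : 3 * k - 3 = k.-1 * 3 by case: k Hk => // k _; rewrite mulSn; lia.
by rewrite modnMl. Qed.
Lemma mod_p (k : nat) : 2 <= k -> (3 * k - 1) %% 3 = 2.
Proof. move=> Hk; have -> : 3 * k - 1 = 2 + 3 * k.-1 by case: k Hk => // k _; rewrite mulnS; lia.
by rewrite addnC mulnC modnMDl. Qed.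

Theorem theoremC (G : graph) (r : nat) (f : gmap G G) :
  connected G -> rank G = r ->
  is_gmap f -> irreducible_map f -> homotopy_equiv f -> one_fold_decomp f ->
  [/\ isomorphic G (Rose r)
        \/ (exists k, 2 <= k /\ isomorphic G (Dminus k))
        \/ (exists k, 2 <= k /\ isomorphic G (Dplus k)),
      r %% 3 = 0 -> isomorphic G (Rose r)
        \/ (exists k, [/\ 2 <= k, 3 * k - 3 = r & isomorphic G (Dminus k)]),
      r %% 3 = 1 -> isomorphic G (Rose r) &
      r %% 3 = 2 -> isomorphic G (Rose r)
        \/ (exists k, [/\ 2 <= k, 3 * k - 1 = r & isomorphic G (Dplus k)])].
Proof.
move=> Hconn Hr Hf Hirr Hhe [u0 [u1 [b0 [b1 [n01 Hx Hcase]]]]].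
have Hmain : isomorphic G (Rose (rank G)) \/
  (exists k, [/\ 2 <= k, rank G = 3 * k - 3 & isomorphic G (Dminus k)]) \/
  (exists k, [/\ 2 <= k, rank G = 3 * k - 1 & isomorphic G (Dplus k)]).
  case: Hcase => [[h [Hi Hg]]|[h [Hi _]]|[h [Hi _]]].
  - exact: pff_main Hconn Hirr n01 Hx Hi Hg.
  - case: (no_pf Hi).
  - case: (no_cf Hi).
subst r.
case: Hmain => [HR|[[k [Hk Hrk Hi]]|[k [Hk Hrk Hi]]]].
- by split; [left | move=> _; left | move=> _ | move=> _; left].
- split.
  + by right; left; exists k.
  + by move=> _; right; exists k.
  + by rewrite Hrk mod_m.
  + by rewrite Hrk mod_m.
- split.
  + by right; right; exists k.
  + by rewrite Hrk mod_p.
  + by rewrite Hrk mod_p.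
  + by move=> _; right; exists k.
Qed.
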